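(* Let $\mathbf{F}\in\{\mathbf{R},\mathbf{C}\}$, $x_*\in\mathbf{F}^d$, and let $A_1,\dots,A_n\in\mathbf{H}_d$ be positive semidefinite, with exact measurements $y=\mathcal{A}(x_*x_*^* )$. For an integer $p\ge1$ consider $$\min_{X\in\mathbf{F}^{d\times p}} f_p(X),\qquad f_p(X)=\|y-\mathcal{A}(XX^* )\|^2 .$$ Suppose that for some constants $\alpha,\beta,L\ge0$, for all $X\in\mathbf{F}^{d\times p}$, $$\tfrac1n\|\mathcal{A}(XX^*-x_*x_*^* )\|^2\ge\alpha\|XX^*-x_*x_*^*\|_F^2+\beta(\|X\|_F^2-\|x_*\|^2)^2,$$ and $$\tfrac1n\mathcal{A}^*\mathcal{A}(x_*x_*^* )\preceq L\|x_*\|^2 I_d .$$ If $(p+2)\left(1+\frac{\beta}{p\beta+\alpha}\right)\alpha>2L$, then every second-order critical point $X$ of $f_p$ satisfies $XX^*=x_*x_*^*$.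
   Context: $\mathbf{H}_d$ denotes the set of $d\times d$ Hermitian matrices over $\mathbf{F}$ with the (real) Frobenius inner product $\langle A,B\rangle=\operatorname{Re}\operatorname{tr}(A^*B)$. $\mathcal{A}:\mathbf{H}_d\to\mathbf{R}^n$ is $\mathcal{A}(S)=(\langle A_1,S\rangle,\dots,\langle A_n,S\rangle)$, with adjoint $\mathcal{A}^*(z)=\sum_iz_iA_i$. $\preceq$ is the positive semidefinite order. A second-order critical point is a point where the gradient is zero and the Hessian quadratic form is positive semidefinite; in the complex case the objective is regarded as a function of the real and imaginary parts of $X$. *)

(* Defs.v *)
From mathcomp Require Import all_boot all_order all_algebra.
From mathcomp Require Import complex.
From mathcomp Require Import all_classical all_reals all_analysis.
Set Implicit Arguments. Unset Strict Implicit. Unset Printing Implicit Defensive.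
Import Order.TTheory GRing.Theory Num.Theory.
Local Open Scope ring_scope.
Local Open Scope complex_scope.

(* The ground field F is encoded inside C = R[i]:
   cplx = true  : F = C,
   cplx = false : F = R, i.e. the elements of C with zero imaginary part.    *)
Definition inF (R : realType) (cplx : bool) (z : R[i]) : bool :=
  cplx || (complex.Im z == 0).

Definition mxF (R : realType) (cplx : bool) m n (M : 'M[R[i]]_(m, n)) : bool :=
  [forall i, forall j, inF cplx (M i j)].

Definition adj (R : realType) m n (M : 'M[R[i]]_(m, n)) : 'M[R[i]]_(n, m) :=
  (map_mx Num.conj M)^T.

Definition hermF (R : realType) (cplx : bool) d (A : 'M[R[i]]_d) : Prop :=
  mxF cplx A /\ adj A = A.

Definition psdF (R : realType) (cplx : bool) d (A : 'M[R[i]]_d) : Prop :=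
  hermF cplx A /\
  forall v : 'cV[R[i]]_d, mxF cplx v -> 0 <= (adj v *m A *m v) 0 0.

Definition frob (R : realType) m n (A B : 'M[R[i]]_(m, n)) : R :=
  complex.Re (\tr (adj A *m B)).

Definition fro2 (R : realType) m n (M : 'M[R[i]]_(m, n)) : R := frob M M.

Definition meas (R : realType) n d (As : 'I_n -> 'M[R[i]]_d) (S : 'M[R[i]]_d)
  : 'I_n -> R := fun k => frob (As k) S.

Definition meas_adj (R : realType) n d (As : 'I_n -> 'M[R[i]]_d) (z : 'I_n -> R)
  : 'M[R[i]]_d := \sum_(k < n) (z k)%:C *: As k.

Definition nrm2 (R : realType) n (z : 'I_n -> R) : R := \sum_(k < n) z k ^+ 2.

Definition fobj (R : realType) n d p (As : 'I_n -> 'M[R[i]]_d) (y : 'I_n -> R)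
  (X : 'M[R[i]]_(d, p)) : R :=
  nrm2 (fun k => y k - meas As (X *m adj X) k).

(* second-order critical point of f : F^{d x p} -> R, f viewed as a function
   of the real and imaginary parts of X (resp. of X itself if F = R):
   along every real line t |-> X + t U (U in F^{d x p}) the function is
   differentiable at 0 with zero derivative (gradient = 0) and its second
   derivative at 0 (the Hessian quadratic form at U) is nonnegative. *)
Definition second_order_critical (R : realType) (cplx : bool) d p
  (f : 'M[R[i]]_(d, p) -> R) (X : 'M[R[i]]_(d, p)) : Prop :=
  mxF cplx X /\
  forall U : 'M[R[i]]_(d, p), mxF cplx U ->
    let g := fun t : R => f (X + t%:C *: U) in
    [/\ derivable g 0 1, derive1 g 0 = 0,
        derivable (derive1 g) 0 1 & 0 <= derive1 (derive1 g) 0].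

(* Main.v *)
Require Import Defs.
From mathcomp Require Import all_boot all_order all_algebra.
From mathcomp Require Import complex.
From mathcomp Require Import all_classical all_reals all_analysis.
From mathcomp Require Import ring lra.
Import Order.TTheory GRing.Theory Num.Theory.
Local Open Scope ring_scope.
Local Open Scope complex_scope.
Set Implicit Arguments. Unset Strict Implicit. Unset Printing Implicit Defensive.

Section Basics.
Variable R : realType.
Local Notation C := R[i].

Lemma conjE (x : C) : Num.conj x = conjc x.
Proof. reflexivity. Qed.

Lemma hadjM m n p (A : 'M[C]_(m,n)) (B : 'M[C]_(n,p)) :
  adj (A *m B) = adj B *m adj A.
Proof. by rewrite /adj map_mxM trmx_mul. Qed.

Lemma hadjD m n (A B : 'M[C]_(m,n)) : adj (A + B) = adj A + adj B.
Proof. by rewrite /adj map_mxD linearD. Qed.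

Lemma hadjN m n (A : 'M[C]_(m,n)) : adj (- A) = - adj A.
Proof. by rewrite /adj map_mxN linearN. Qed.

Lemma hadjB m n (A B : 'M[C]_(m,n)) : adj (A - B) = adj A - adj B.
Proof. by rewrite hadjD hadjN. Qed.

Lemma hadjK m n (A : 'M[C]_(m,n)) : adj (adj A) = A.
Proof.
apply/matrixP => i j; rewrite /adj !mxE; exact: conjCK.
Qed.

Lemma hadjZ m n (r : R) (A : 'M[C]_(m,n)) : adj (r%:C *: A) = r%:C *: adj A.
Proof.
apply/matrixP => i j; rewrite /adj !mxE rmorphM /=.
by rewrite conjE conjc_real.
Qed.

Lemma hadj1 m : adj (1%:M : 'M[C]_m) = 1%:M.
Proof.
apply/matrixP => i j; rewrite /adj !mxE eq_sym.
by case: (i == j); rewrite /= ?rmorph1 ?rmorph0 ?conjE ?conjc1 ?conjc0.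
Qed.

Lemma hadj_sum m n (I : finType) (F : I -> 'M[C]_(m,n)) :
  adj (\sum_i F i) = \sum_i adj (F i).
Proof.
apply: (big_morph _ (@hadjD m n)).
apply/matrixP => i j; rewrite /adj !mxE; exact: rmorph0.
Qed.

Lemma Re_conj (z : C) : complex.Re (Num.conj z) = complex.Re z.
Proof. by case: z. Qed.

Lemma Im_conj (z : C) : complex.Im (Num.conj z) = - complex.Im z.
Proof. by case: z. Qed.

Lemma tr_adj n (A : 'M[C]_n) : \tr (adj A) = Num.conj (\tr A).
Proof.
rewrite /adj mxtrace_tr /mxtrace rmorph_sum; apply: eq_bigr => i _.
by rewrite mxE.
Qed.

Lemma frobC m n (A B : 'M[C]_(m,n)) : frob A B = frob B A.
Proof.
by rewrite /frob -[in RHS](hadjK A) -hadjM tr_adj Re_conj.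
Qed.

Lemma frobDr m n (A B D : 'M[C]_(m,n)) : frob A (B + D) = frob A B + frob A D.
Proof. by rewrite /frob mulmxDr mxtraceD raddfD. Qed.

Lemma frobNr m n (A B : 'M[C]_(m,n)) : frob A (- B) = - frob A B.
Proof. by rewrite /frob mulmxN linearN raddfN. Qed.

Lemma frobBr m n (A B D : 'M[C]_(m,n)) : frob A (B - D) = frob A B - frob A D.
Proof. by rewrite frobDr frobNr. Qed.

Lemma frobZr m n (r : R) (A B : 'M[C]_(m,n)) :
  frob A (r%:C *: B) = r * frob A B.
Proof.
rewrite /frob -scalemxAr mxtraceZ.
by case: (\tr _) => a b /=; rewrite !mul0r subr0.
Qed.

Lemma frob0r m n (A : 'M[C]_(m,n)) : frob A 0 = 0.
Proof. by rewrite /frob mulmx0 mxtrace0. Qed.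

Lemma frob_sumr m n (I : finType) (A : 'M[C]_(m,n)) (F : I -> 'M[C]_(m,n)) :
  frob A (\sum_i F i) = \sum_i frob A (F i).
Proof.
apply: (big_morph _ (@frobDr m n A)); exact: frob0r.
Qed.

Lemma frobDl m n (A B D : 'M[C]_(m,n)) : frob (B + D) A = frob B A + frob D A.
Proof. by rewrite frobC frobDr !(frobC A). Qed.
Lemma frobNl m n (A B : 'M[C]_(m,n)) : frob (- B) A = - frob B A.
Proof. by rewrite frobC frobNr frobC. Qed.
Lemma frobBl m n (A B D : 'M[C]_(m,n)) : frob (B - D) A = frob B A - frob D A.
Proof. by rewrite frobDl frobNl. Qed.
Lemma frobZl m n (r : R) (A B : 'M[C]_(m,n)) :
  frob (r%:C *: B) A = r * frob B A.
Proof. by rewrite frobC frobZr frobC. Qed.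

Lemma frobMl m n p (A : 'M[C]_(m,n)) (B : 'M[C]_(n,p)) (D : 'M[C]_(m,p)) :
  frob (A *m B) D = frob B (adj A *m D).
Proof. by rewrite /frob hadjM mulmxA. Qed.

Lemma frobMr m n p (A : 'M[C]_(m,n)) (B : 'M[C]_(n,p)) (D : 'M[C]_(m,p)) :
  frob (A *m B) D = frob A (D *m adj B).
Proof. by rewrite /frob hadjM -mulmxA mxtrace_mulC mulmxA. Qed.

Lemma fro2E m n (A : 'M[C]_(m,n)) :
  fro2 A = \sum_j \sum_i ((complex.Re (A i j))^+2 + (complex.Im (A i j))^+2).
Proof.
rewrite /fro2 /frob /mxtrace raddf_sum /=; apply: eq_bigr => j _.
rewrite mxE raddf_sum /=; apply: eq_bigr => i _.
rewrite /adj !mxE conjE; case: (A i j) => a b /=.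
by rewrite !expr2 /= mulNr opprK.
Qed.

Lemma fro2_ge0 m n (A : 'M[C]_(m,n)) : 0 <= fro2 A.
Proof.
rewrite fro2E; apply: sumr_ge0 => j _; apply: sumr_ge0 => i _.
by rewrite addr_ge0 // sqr_ge0.
Qed.

Lemma fro2_eq0 m n (A : 'M[C]_(m,n)) : fro2 A = 0 -> A = 0.
Proof.
rewrite fro2E => /eqP; rewrite psumr_eq0; last first.
  by move=> j _; apply: sumr_ge0 => i _; rewrite addr_ge0 // sqr_ge0.
move=> /allP H; apply/matrixP => i j; rewrite mxE.
have /implyP := H j (mem_index_enum _); move=> /(_ isT).
rewrite psumr_eq0; last by move=> k _; rewrite addr_ge0 // sqr_ge0.
move=> /allP /(_ i (mem_index_enum _)) /implyP /(_ isT).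
rewrite paddr_eq0 ?sqr_ge0 // !sqrf_eq0 => /andP[/eqP a /eqP b].
by apply/eqP; rewrite eq_complex /= a b !eqxx.
Qed.

End Basics.


Section MxF.
Variable R : realType.
Local Notation C := R[i].
Variable cplx : bool.

Lemma inF0 : inF cplx (0 : C).
Proof. by rewrite /inF /= eqxx orbT. Qed.
Lemma inFD (a b : C) : inF cplx a -> inF cplx b -> inF cplx (a + b).
Proof.
rewrite /inF; case: cplx => //= /eqP ha /eqP hb.
by rewrite raddfD /= ha hb addr0.
Qed.
Lemma inFN (a : C) : inF cplx a -> inF cplx (- a).
Proof. rewrite /inF; case: cplx => //= /eqP ha. by rewrite raddfN /= ha oppr0. Qed.
Lemma inFM (a b : C) : inF cplx a -> inF cplx b -> inF cplx (a * b).
Proof.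
rewrite /inF; case: cplx => //=; case: a => a1 a2; case: b => b1 b2 /=.
by move=> /eqP -> /eqP ->; rewrite !mulr0 !mul0r addr0.
Qed.
Lemma inFJ (a : C) : inF cplx a -> inF cplx (Num.conj a).
Proof. rewrite /inF conjE; case: cplx => //=; case: a => a1 a2 /= /eqP ->. by rewrite oppr0. Qed.
Lemma inFR (r : R) : inF cplx (r%:C).
Proof. by rewrite /inF /= eqxx orbT. Qed.
Lemma inF_sum (I : finType) (F : I -> C) :
  (forall i, inF cplx (F i)) -> inF cplx (\sum_i F i).
Proof.
move=> H; apply: (big_ind (inF cplx)); [exact: inF0| exact: inFD| move=> i _; exact: H].
Qed.

Lemma mxFP m n (M : 'M[C]_(m,n)) : mxF cplx M <-> forall i j, inF cplx (M i j).
Proof.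
split; first by move=> /forallP H i j; have /forallP := H i; apply.
by move=> H; apply/forallP => i; apply/forallP => j; apply: H.
Qed.

Lemma mxFD m n (A B : 'M[C]_(m,n)) : mxF cplx A -> mxF cplx B -> mxF cplx (A + B).
Proof. move=> /mxFP ha /mxFP hb; apply/mxFP => i j; rewrite mxE; exact: inFD. Qed.
Lemma mxFN m n (A : 'M[C]_(m,n)) : mxF cplx A -> mxF cplx (- A).
Proof. move=> /mxFP ha; apply/mxFP => i j; rewrite mxE; exact: inFN. Qed.
Lemma mxFB m n (A B : 'M[C]_(m,n)) : mxF cplx A -> mxF cplx B -> mxF cplx (A - B).
Proof. by move=> ha hb; apply: mxFD => //; apply: mxFN. Qed.
Lemma mxFM m n p (A : 'M[C]_(m,n)) (B : 'M[C]_(n,p)) :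
  mxF cplx A -> mxF cplx B -> mxF cplx (A *m B).
Proof.
move=> /mxFP ha /mxFP hb; apply/mxFP => i j; rewrite mxE.
apply: inF_sum => k; exact: inFM.
Qed.
Lemma mxFadj m n (A : 'M[C]_(m,n)) : mxF cplx A -> mxF cplx (adj A).
Proof. move=> /mxFP ha; apply/mxFP => i j; rewrite /adj !mxE; exact: inFJ. Qed.
Lemma mxFZ m n (r : R) (A : 'M[C]_(m,n)) : mxF cplx A -> mxF cplx (r%:C *: A).
Proof. move=> /mxFP ha; apply/mxFP => i j; rewrite mxE; apply: inFM => //; exact: inFR. Qed.
Lemma mxFdelta m n i0 j0 : mxF cplx (delta_mx i0 j0 : 'M[C]_(m,n)).
Proof.
apply/mxFP => i j; rewrite mxE; case: (_ && _) => /=.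
  exact: (inFR 1).
exact: (inFR 0).
Qed.

End MxF.

Section Vec.
Variable R : realType.
Local Notation C := R[i].

Lemma mxtrace11 (A : 'M[C]_1) : \tr A = A 0 0.
Proof. by rewrite /mxtrace big_ord1. Qed.

Lemma qform_frob d (v : 'cV[C]_d) (B : 'M[C]_d) :
  complex.Re ((adj v *m B *m v) 0 0) = frob (adj B) (v *m adj v).
Proof.
by rewrite /frob hadjK mulmxA mxtrace_mulC mulmxA mxtrace11.
Qed.

Lemma hadj_vv d (v : 'cV[C]_d) : adj v *m v = ((fro2 v)%:C)%:M.
Proof.
apply/matrixP => i j; rewrite !ord1 /fro2 /frob mxtrace11 !mxE eqxx /=.
rewrite mulr1n; apply/eqP; rewrite eq_complex /= eqxx /=.
rewrite raddf_sum /=; apply/eqP; apply: big1 => k _.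
rewrite /adj !mxE conjE; case: (v k 0) => a b /=.
by rewrite mulNr mulrC subrr.
Qed.

Lemma psd_ge0 cplx d (A : 'M[C]_d) (v : 'cV[C]_d) :
  psdF cplx A -> mxF cplx v -> 0 <= frob A (v *m adj v).
Proof.
move=> [[_ hA] H] hv; have := H v hv.
rewrite lecE /= => /andP[_]; by rewrite qform_frob hA.
Qed.

Lemma discr (a b c : R) : 0 <= c -> (forall s : R, 0 <= a + s * b + s ^+ 2 * c) ->
  b ^+ 2 <= 4 * a * c.
Proof.
move=> c0 H; have [ce|cn0] := eqVneq c 0.
  rewrite ce in H *.
  have [->|bn0] := eqVneq b 0; first by rewrite expr0n /= mulr0.
  have := H (- (a + 1) / b); rewrite mulr0 addr0.
  rewrite mulrAC -mulrA divff // mulr1; lra.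
have cp : 0 < c by rewrite lt_def cn0.
have := H (- b / (2 * c)).
have -> : a + - b / (2 * c) * b + (- b / (2 * c)) ^+ 2 * c
        = a - b ^+ 2 / (4 * c) by field; rewrite cn0.
rewrite subr_ge0 ler_pdivrMr; last by lra.
by rewrite mulrA (mulrC a).
Qed.

End Vec.


Section CS.
Variable R : realType.
Local Notation C := R[i].

Lemma frob_CS m n (A B : 'M[C]_(m,n)) : frob A B ^+ 2 <= fro2 A * fro2 B.
Proof.
have := @discr R (fro2 A) (2 * frob A B) (fro2 B) (fro2_ge0 B).
have H : forall s : R, 0 <= fro2 A + s * (2 * frob A B) + s ^+ 2 * fro2 B.
  move=> s; have := fro2_ge0 (A + s%:C *: B).
  rewrite /fro2 frobDl !frobDr !frobZl !frobZr (frobC B A); lra.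
move=> /(_ H); rewrite exprMn; lra.
Qed.

Lemma frobMDl m n k (A : 'M[C]_(m,k)) (B D : 'M[C]_(m,n)) (M : 'M[C]_(n,k)) :
  frob A ((B + D) *m M) = frob A (B *m M) + frob A (D *m M).
Proof. by rewrite mulmxDl frobDr. Qed.
Lemma frobMDr m n k (A : 'M[C]_(m,k)) (B D : 'M[C]_(n,k)) (M : 'M[C]_(m,n)) :
  frob A (M *m (B + D)) = frob A (M *m B) + frob A (M *m D).
Proof. by rewrite mulmxDr frobDr. Qed.
Lemma frobMZl m n k (A : 'M[C]_(m,k)) r (B : 'M[C]_(m,n)) (M : 'M[C]_(n,k)) :
  frob A ((r%:C *: B) *m M) = r * frob A (B *m M).
Proof. by rewrite -scalemxAl frobZr. Qed.
Lemma frobMZr m n k (A : 'M[C]_(m,k)) r (B : 'M[C]_(n,k)) (M : 'M[C]_(m,n)) :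
  frob A (M *m (r%:C *: B)) = r * frob A (M *m B).
Proof. by rewrite -scalemxAr frobZr. Qed.
Lemma psd_CS cplx d (A : 'M[C]_d) (v w : 'cV[C]_d) :
  psdF cplx A -> mxF cplx v -> mxF cplx w ->
  frob A (w *m adj v + v *m adj w) ^+ 2
    <= 4 * frob A (v *m adj v) * frob A (w *m adj w).
Proof.
move=> hA hv hw; apply: discr; first exact: psd_ge0 hA hw.
move=> s; have := psd_ge0 hA (mxFD hv (mxFZ s hw)).
rewrite hadjD hadjZ frobMDl !frobMDr !frobMZl !frobMZr (frobDr A).
move: (frob A (v *m adj v)) (frob A (w *m adj v)) (frob A (v *m adj w))
  (frob A (w *m adj w)) => a b c f; rewrite expr2; lra.
Qed.

End CS.

Section Deriv.
Variable R : realType.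

Lemma deriv_quart n (e b c : 'I_n -> R) (g : R -> R) :
  (forall t, g t = \sum_k (e k - t * b k - t ^+ 2 * c k) ^+ 2) ->
  derive1 g 0 = - 2 * \sum_k e k * b k /\
  derive1 (derive1 g) 0 = 2 * \sum_k (b k ^+ 2 - 2 * e k * c k).
Proof.
move=> hg.
pose P : {poly R} := \sum_k ((e k)%:P - b k *: 'X - c k *: 'X^2) ^+ 2.
have gP : g = horner P.
  apply: funext => t; rewrite hg /P horner_sum; apply: eq_bigr => k _.
  by rewrite horner_exp !(hornerD, hornerN, hornerZ, hornerC, hornerX, hornerXn); ring.
rewrite gP -!derive.derivE !horner_coef0 !coef_deriv.
rewrite /P !coef_sum; split.
  rewrite mulr_sumr; apply: eq_bigr => k _.
  rewrite expr2 coefM !big_ord_recr big_ord0 /= !coefE /=; ring.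
rewrite mulr1n mulr_sumr -sumrMnl; apply: eq_bigr => k _.
rewrite expr2 coefM !big_ord_recr big_ord0 /= !coefE /=; ring.
Qed.
End Deriv.


Section Lower.
Variable R : realType.
Local Notation C := R[i].

Lemma frob1l n (M : 'M[C]_n) : frob 1%:M M = complex.Re (\tr M).
Proof. by rewrite /frob hadj1 mul1mx. Qed.

Lemma fro2_1 n : fro2 (1%:M : 'M[C]_n) = n%:R.
Proof.
rewrite /fro2 frob1l mxtrace1.
by rewrite -[n%:R]/((1 : C) *+ n) raddfMn.
Qed.

Lemma tr_bound n (K : 'M[C]_n) : complex.Re (\tr K) ^+ 2 <= n%:R * fro2 K.
Proof. by rewrite -frob1l -fro2_1; apply: frob_CS. Qed.

Lemma frob_scal_vec d (x : 'cV[C]_d) :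
  frob (x *m adj x) (x *m adj x) = fro2 x ^+ 2.
Proof.
rewrite frobMr hadjK -mulmxA hadj_vv mul_mx_scalar frobZr /fro2 /frob.
by rewrite expr2.
Qed.

Lemma frob_tr_vv d (x : 'cV[C]_d) : frob 1%:M (x *m adj x) = fro2 x.
Proof. by rewrite frob1l mxtrace_mulC. Qed.

Lemma frob_gram m n (X : 'M[C]_(m,n)) :
  frob (X *m adj X) (X *m adj X) = frob (adj X *m X) (adj X *m X).
Proof.
by rewrite frobMl mulmxA -frobMr.
Qed.

Lemma frob_gram_vec m n (X : 'M[C]_(m,n)) (x : 'cV[C]_m) :
  frob (X *m adj X) (x *m adj x) = fro2 (adj X *m x).
Proof. by rewrite frobMl mulmxA -frobMr. Qed.

Lemma frob_gram_vec' m n (X : 'M[C]_(m,n)) (w : 'cV[C]_n) :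
  frob (adj X *m X) (w *m adj w) = fro2 (X *m w).
Proof. by rewrite frobC frobMr hadjK frobC -mulmxA frobMl hadjK. Qed.

Lemma lower_scalar (al be P nu a1 a2 T t : R) :
  0 < al -> 0 <= be -> 1 <= P -> 0 < nu ->
  (t - nu * a1) ^+ 2 <= P * (T - 2 * nu * a2 + nu ^+ 2 * a1 ^+ 2) ->
  (nu * a1) ^+ 2 <= nu * a2 ->
  (al + al * be / (P * be + al)) * (nu * (nu - 2 * nu * a1 + a2))
    <= al * (T - 2 * (nu ^+ 2 * a1) + nu ^+ 2) + be * (t - nu) ^+ 2.
Proof.
move=> alp be0 pR nup F6 F7.
set D := P * be + al.
have pb0 : 0 <= P * be by apply: mulr_ge0; lra.
have Dp : 0 < D by rewrite /D; lra.
set k := al * be / D.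
have k0 : 0 <= k by rewrite /k divr_ge0 //; [apply: mulr_ge0; lra | lra].
have kal : k <= al.
  rewrite /k ler_pdivrMr // /D.
  have : 0 <= al * ((P - 1) * be + al).
    by apply: mulr_ge0; [lra| apply: addr_ge0; [apply: mulr_ge0; lra| lra]].
  nra.
have D1 : 0 <= nu * a2 - nu ^+ 2 * a1 ^+ 2 by rewrite -exprMn subr_ge0.
set tau := t - nu * a1.
set e := nu * (a1 - 1).
have h1 : al * tau ^+ 2 / P <= al * (T - 2 * nu * a2 + nu ^+ 2 * a1 ^+ 2).
  rewrite ler_pdivrMr; last by lra.
  have := ler_wpM2l (ltW alp) F6; rewrite -/tau => h.
  by apply: (le_trans h); rewrite le_eqVlt; apply/orP; left; apply/eqP; ring.
have h3 : al * tau ^+ 2 / P + be * (tau + e) ^+ 2 - k * e ^+ 2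
          = (D * tau + P * be * e) ^+ 2 / (P * D).
  rewrite /k /D; field.
  by apply/andP; split; apply/eqP; [lra| rewrite -/D; lra].
have h4 : 0 <= (D * tau + P * be * e) ^+ 2 / (P * D).
  by apply: divr_ge0; [exact: sqr_ge0| apply: mulr_ge0; lra].
have h5 : 0 <= (al - k) * (nu * a2 - nu ^+ 2 * a1 ^+ 2) by apply: mulr_ge0 => //; lra.
have iden : al * (T - 2 * (nu ^+ 2 * a1) + nu ^+ 2) + be * (t - nu) ^+ 2
   - (al + k) * (nu * (nu - 2 * nu * a1 + a2))
   = al * (T - 2 * nu * a2 + nu ^+ 2 * a1 ^+ 2) + (al - k) * (nu * a2 - nu ^+ 2 * a1 ^+ 2)
     + be * (tau + e) ^+ 2 - k * e ^+ 2.
  rewrite /tau /e; ring.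
rewrite -subr_ge0 iden; lra.
Qed.

Lemma lower_bound d p (X : 'M[C]_(d,p)) (x : 'cV[C]_d) (al be : R) :
  forall (nu : R) (w : 'cV[C]_p) (v : 'cV[C]_d),
  0 < al -> 0 <= be -> (1 <= p)%N ->
  nu = fro2 x -> w = (nu^-1)%:C *: (adj X *m x) -> v = x - X *m w ->
  (al + al * be / (p%:R * be + al)) * (nu * fro2 v)
    <= al * fro2 (X *m adj X - x *m adj x) + be * (fro2 X - nu) ^+ 2.
Proof.
move=> nu w v alp be0 p1 hnu hw hv.
have pR : 1 <= (p%:R : R) by rewrite ler1n.
have [nue|nun] := eqVneq nu 0.
  rewrite {1}nue mul0r mulr0.
  by apply: addr_ge0; [apply: mulr_ge0; [exact: ltW| exact: fro2_ge0] | apply: mulr_ge0; [done| exact: sqr_ge0]].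
have nup : 0 < nu by rewrite lt_def nun hnu fro2_ge0.
set a1 := fro2 w.
set a2 := fro2 (X *m w).
set T := frob (adj X *m X) (adj X *m X).
set t := fro2 X.
have hXx : adj X *m x = nu%:C *: w.
  by rewrite hw scalerA -rmorphM /= divff // scale1r.
have F1 : frob x (X *m w) = nu * a1.
  by rewrite frobC frobMl hXx frobZr.
have F2 : fro2 v = nu - 2 * nu * a1 + a2.
  rewrite hv /fro2 frobBl !frobBr F1 (frobC (X *m w) x) F1 -/(fro2 x) -hnu.
  rewrite -/(fro2 (X *m w)) -/a2; ring.
have F3 : fro2 (X *m adj X - x *m adj x) = T - 2 * (nu ^+ 2 * a1) + nu ^+ 2.
  rewrite /fro2 frobBl !frobBr frob_gram frob_scal_vec (frobC (x *m adj x)).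
  rewrite frob_gram_vec hXx -hnu /fro2 frobZl frobZr -/a1 -/T; ring.
pose K := adj X *m X - nu%:C *: (w *m adj w).
have F4 : complex.Re (\tr K) = t - nu * a1.
  by rewrite -frob1l /K frobBr frobZr frob_tr_vv frob1l.
have F5 : fro2 K = T - 2 * nu * a2 + nu ^+ 2 * a1 ^+ 2.
  rewrite /fro2 /K frobBl !frobBr !frobZl !frobZr frob_scal_vec.
  rewrite frob_gram_vec' (frobC (w *m adj w)) frob_gram_vec' -/T -/a2 -/a1; ring.
have F6 := tr_bound K.
rewrite F4 F5 in F6.
have F7 := frob_CS x (X *m w).
rewrite F1 -hnu -/a2 in F7.
rewrite F2 F3 -/t.
exact: lower_scalar.
Qed.

End Lower.

Section Main.
Variable R : realType.
Local Notation C := R[i].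
Lemma expand_sq d p (A : 'M[C]_d) (X U : 'M[C]_(d,p)) (t : R) :
  frob A ((X + t%:C *: U) *m adj (X + t%:C *: U))
  = frob A (X *m adj X) + t * frob A (X *m adj U + U *m adj X)
    + t ^+ 2 * frob A (U *m adj U).
Proof.
rewrite hadjD hadjZ frobMDl !frobMDr !frobMZl !frobMZr frobDr.
by rewrite mulrDr expr2 mulrA !addrA.
Qed.

Lemma hadj_delta m n i j : adj (delta_mx i j : 'M[C]_(m,n)) = delta_mx j i.
Proof.
apply/matrixP => a b; rewrite /adj !mxE andbC.
by case: (_ && _); rewrite /= ?conjE ?conjc1 ?conjc0.
Qed.

Lemma delta11 : (delta_mx 0 0 : 'M[C]_1) = 1%:M.
Proof. by apply/matrixP => a b; rewrite !ord1 !mxE. Qed.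

Lemma frob_suml m n (I : finType) (A : 'M[C]_(m,n)) (F : I -> 'M[C]_(m,n)) :
  frob (\sum_i F i) A = \sum_i frob (F i) A.
Proof. rewrite frobC frob_sumr; apply: eq_bigr => i _; exact: frobC. Qed.

Lemma crit_cons cplx d n p (As : 'I_n -> 'M[C]_d) (y : 'I_n -> R)
  (X : 'M[C]_(d,p)) :
  second_order_critical cplx (fobj As y) X ->
  forall U, mxF cplx U ->
  \sum_k (y k - frob (As k) (X *m adj X)) * frob (As k) (X *m adj U + U *m adj X) = 0
  /\ 0 <= \sum_k (frob (As k) (X *m adj U + U *m adj X) ^+ 2
           - 2 * (y k - frob (As k) (X *m adj X)) * frob (As k) (U *m adj U)).
Proof.
move=> [hX H] U hU; have [_ h1 _ h2] := H U hU.
have hg : forall t, fobj As y (X + t%:C *: U) =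
   \sum_k ((y k - frob (As k) (X *m adj X)) - t * frob (As k) (X *m adj U + U *m adj X)
            - t ^+ 2 * frob (As k) (U *m adj U)) ^+ 2.
  move=> t; rewrite /fobj /nrm2; apply: eq_bigr => k _.
  rewrite /meas expand_sq; congr (_ ^+ 2).
  move: (frob _ _) (frob _ _) (frob _ _) => a b c; ring.
have [d1 d2] := deriv_quart hg.
rewrite d1 in h1; rewrite d2 in h2.
move: h1 h2; set s1 := \sum_k _; set s2 := \sum_k _; move=> h1 h2; split; lra.
Qed.

End Main.


Lemma final_scalar (R : realType) (n : nat) (P E Scy V Q c0 L : R) :
  1 <= P -> 0 <= E -> 0 <= V -> 0 <= c0 -> 0 <= L ->
  (n = 0%N -> E = 0) ->
  2 * P * E <= 4 * Scy - 4 * E ->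
  0 <= L * V - n%:R^-1 * Scy ->
  Q <= n%:R^-1 * E ->
  c0 * V <= Q ->
  2 * L < (P + 2) * c0 ->
  Q <= 0.
Proof.
move=> P1 E0 V0 c00 L0 hn h1 h2 h3 h4 hc.
have [n0|nn0] := eqVneq n 0%N.
  by move: h3; rewrite (hn n0) mulr0.
have Np : 0 < (n%:R : R) by rewrite ltr0n lt0n.
set N := (n%:R : R) in Np h2 h3 *.
have Nn0 : N != 0 by rewrite lt0r_neq0.
have hNi : N * N^-1 = 1 by rewrite mulfV.
have i2 : 0 <= N * (L * V) - Scy.
  by have := mulr_ge0 (ltW Np) h2; rewrite mulrBr [N * (N^-1 * _)]mulrA hNi mul1r.
have i1 : (P + 2) * E <= 2 * Scy by lra.
have i3 := ler_wpM2l c00 i1.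
have i4 : c0 * (2 * Scy) <= c0 * (2 * (N * (L * V))).
  by apply: ler_wpM2l => //; lra.
have NL0 : 0 <= N * L by apply: mulr_ge0 => //; exact: ltW.
have i5 := ler_wpM2l NL0 h4.
have i6 := ler_wpM2l NL0 h3.
have e6 : N * L * (N^-1 * E) = L * E by field.
rewrite e6 in i6.
have i7 : ((P + 2) * c0 - 2 * L) * E <= 0.
  lra.
have cp : 0 < (P + 2) * c0 - 2 * L by lra.
have E00 : E <= 0.
  rewrite -(pmulr_rle0 _ cp); exact: i7.
have E_0 : E = 0 by lra.
by move: h3; rewrite E_0 mulr0.
Qed.

Lemma lemH1 (R : realType) (a b c : R) : 0 <= b - c -> b <= a -> c <= a.
Proof. lra. Qed.

Lemma lemH3 (R : realType) (al F B : R) :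
  0 < al -> 0 <= B -> al * F + B <= 0 -> F <= 0.
Proof. move=> alp B0 h; rewrite -(pmulr_rle0 _ alp); lra. Qed.

Lemma lemH4 (R : realType) (al L K : R) :
  0 <= al -> 0 <= L -> 2 * L < K * al -> 0 < al.
Proof.
move=> al0 L0 h; rewrite lt_def al0 andbT; apply/eqP => a0.
by move: h; rewrite a0 mulr0; lra.
Qed.

Lemma lemH0 (R : realType) (s : R) : 2 * s = 0 -> s = 0.
Proof. lra. Qed.

Lemma comb_b (R : realType) n (e c y b1 b2 : 'I_n -> R) :
  (forall k, e k * c k = e k * y k - b1 k + b2 k / 2) ->
  \sum_k b1 k = 0 -> \sum_k b2 k = 0 ->
  \sum_k e k * c k = \sum_k e k * y k.
Proof.
move=> h h1 h2; rewrite (eq_bigr _ (fun k _ => h k)) big_split /= sumrB.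
by rewrite -mulr_suml h1 h2 mul0r subr0 addr0.
Qed.

Lemma comb_j (R : realType) n (e c b q : 'I_n -> R) :
  0 <= \sum_k (b k ^+ 2 - 2 * e k * c k) ->
  (forall k, b k ^+ 2 <= 4 * c k * q k) ->
  2 * \sum_k e k * c k <= \sum_k 4 * c k * q k.
Proof.
move=> h1 h2.
have h3 : \sum_k b k ^+ 2 <= \sum_k 4 * c k * q k by apply: ler_sum => k _.
have h4 : \sum_k 2 * e k * c k = 2 * \sum_k e k * c k.
  by rewrite mulr_sumr; apply: eq_bigr => k _; rewrite mulrA.
move: h1; rewrite sumrB h4; move: h3; lra.
Qed.

Lemma comb_final (R : realType) n p (e c y z : 'I_n -> R) :
  (2 * \sum_k e k * c k) *+ p <= \sum_k 4 * c k * z k ->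
  (forall k, e k = y k - z k) -> \sum_k e k * z k = 0 ->
  \sum_k e k * c k = \sum_k e k * y k ->
  2 * p%:R * \sum_k e k ^+ 2 <= 4 * \sum_k c k * y k - 4 * \sum_k e k ^+ 2.
Proof.
move=> hc he hz hb.
have hey : \sum_k e k * y k = \sum_k e k ^+ 2.
  have -> : \sum_k e k * y k = \sum_k e k ^+ 2 + \sum_k e k * z k.
    rewrite -big_split; apply: eq_bigr => k _ /=; rewrite he; ring.
  by rewrite hz addr0.
have hcz : \sum_k 4 * c k * z k = 4 * \sum_k c k * y k - 4 * \sum_k e k * c k.
  rewrite !mulr_sumr -sumrB; apply: eq_bigr => k _; rewrite he; ring.
by move: hc; rewrite hcz hb hey -mulr_natr mulrAC.
Qed.


Unset Implicit Arguments. Set Strict Implicit. Set Printing Implicit Defensive.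

Theorem theorem2 (R : realType) (cplx : bool) (d n p : nat)
  (xs : 'cV[R[i]]_d) (As : 'I_n -> 'M[R[i]]_d) (alpha beta L : R) :
  mxF cplx xs ->
  (forall k, psdF cplx (As k)) ->
  (1 <= p)%N ->
  0 <= alpha -> 0 <= beta -> 0 <= L ->
  (forall X : 'M[R[i]]_(d, p), mxF cplx X ->
     n%:R^-1 * nrm2 (meas As (X *m adj X - xs *m adj xs))
       >= alpha * fro2 (X *m adj X - xs *m adj xs)
          + beta * (fro2 X - fro2 xs) ^+ 2) ->
  psdF cplx ((L * fro2 xs)%:C *: 1%:M
             - (n%:R^-1)%:C *: meas_adj As (meas As (xs *m adj xs))) ->
  (p%:R + 2) * (1 + beta / (p%:R * beta + alpha)) * alpha > 2 * L ->
  forall X : 'M[R[i]]_(d, p),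
    second_order_critical cplx (fobj As (meas As (xs *m adj xs))) X ->
    X *m adj X = xs *m adj xs.
Proof.
move=> hx hA p1 al0 be0 L0 hRIP hM hcond X hcrit.
have hX : mxF cplx X := hcrit.1.
have alp : 0 < alpha := lemH4 al0 L0 hcond.
have crit := crit_cons hcrit.
set y := meas As (xs *m adj xs) in hM crit *.
pose z k := frob (As k) (X *m adj X).
pose e k := y k - z k.
have ha : \sum_k e k * z k = 0.
  have [h _] := crit X hX.
  have e2 : \sum_k e k * frob (As k) (X *m adj X + X *m adj X) = 2 * \sum_k e k * z k.
    rewrite mulr_sumr; apply: eq_bigr => k _; rewrite frobDr -/(z k).
    move: (z k) (e k) => a b; ring.
  have : 2 * \sum_k e k * z k = 0 by rewrite -e2; exact: h.
  exact: lemH0.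
set nu := fro2 xs.
pose w := (nu^-1)%:C *: (adj X *m xs).
pose v := xs - X *m w.
have hw : mxF cplx w := mxFZ _ (mxFM (mxFadj hX) hx).
have hv : mxF cplx v := mxFB hx (mxFM hX hw).
pose m := X *m w.
pose cv k := frob (As k) (v *m adj v).
have hb : \sum_k e k * cv k = \sum_k e k * y k.
  pose U1 := xs *m adj w. pose U2 := X *m w *m adj w.
  have hU1 : mxF cplx U1 := mxFM hx (mxFadj hw).
  have hU2 : mxF cplx U2 := mxFM (mxFM hX hw) (mxFadj hw).
  have [c1 _] := crit U1 hU1.
  have [c2 _] := crit U2 hU2.
  have E1 : X *m adj U1 + U1 *m adj X = m *m adj xs + xs *m adj m.
    congr (_ + _); first by rewrite hadjM hadjK mulmxA.
    by rewrite /m hadjM mulmxA.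
  have E2 : X *m adj U2 + U2 *m adj X = m *m adj m + m *m adj m.
    congr (_ + _); first by rewrite /U2 /m hadjM hadjK mulmxA.
    by rewrite /U2 /m hadjM mulmxA.
  have E3 : v *m adj v = xs *m adj xs - (m *m adj xs + xs *m adj m) + m *m adj m.
    rewrite /v -/m hadjB mulmxBl !mulmxBr.
    move: (xs *m adj xs) (xs *m adj m) (m *m adj xs) (m *m adj m) => a b c f.
    by apply/matrixP => i j; rewrite !mxE; ring.
  have Ek : forall k, e k * cv k = e k * y k
     - (y k - frob (As k) (X *m adj X)) * frob (As k) (X *m adj U1 + U1 *m adj X)
     + (y k - frob (As k) (X *m adj X)) * frob (As k) (X *m adj U2 + U2 *m adj X) / 2.
    move=> k; rewrite /cv E1 E2 E3 frobDr frobBr !frobDr.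
    change (frob (As k) (xs *m adj xs)) with (y k).
    rewrite /e /z.
    move: (y k) (frob (As k) (X *m adj X)) (frob (As k) (m *m adj xs))
      (frob (As k) (xs *m adj m)) (frob (As k) (m *m adj m)) => a b c f g.
    by field.
  exact: (comb_b Ek c1 c2).
have E6 : forall k, \sum_(j < p) frob (As k) ((X *m delta_mx j (0 : 'I_1)) *m adj (X *m delta_mx j (0 : 'I_1))) = z k.
  have G : X *m adj X = \sum_(j < p) (X *m delta_mx j (0 : 'I_1)) *m adj (X *m delta_mx j (0 : 'I_1)).
    have -> : \sum_(j < p) (X *m delta_mx j (0 : 'I_1)) *m adj (X *m delta_mx j (0 : 'I_1))
            = \sum_(j < p) X *m delta_mx j j *m adj X.
      by apply: eq_bigr => j _; rewrite hadjM hadj_delta !mulmxA -(mulmxA X) mul_delta_mx.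
    by rewrite -mulmx_suml -mulmx_sumr -mx1_sum_delta mulmx1.
  by move=> k; rewrite /z [in RHS]G frob_sumr.
have Hj : forall j : 'I_p, 2 * \sum_k e k * cv k <=
    \sum_k 4 * cv k * frob (As k) ((X *m delta_mx j (0 : 'I_1)) *m adj (X *m delta_mx j (0 : 'I_1))).
  move=> j.
  pose Uj := v *m (delta_mx 0 j : 'M[R[i]]_(1,p)).
  pose xj := X *m (delta_mx j 0 : 'M[R[i]]_(p,1)).
  have hUj : mxF cplx Uj := mxFM hv (mxFdelta _ _ _ _).
  have hxj : mxF cplx xj := mxFM hX (mxFdelta _ _ _ _).
  have E4 : Uj *m adj Uj = v *m adj v.
    by rewrite /Uj hadjM hadj_delta mulmxA -(mulmxA v) mul_delta_mx delta11 mulmx1.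
  have E5 : X *m adj Uj + Uj *m adj X = xj *m adj v + v *m adj xj.
    congr (_ + _); first by rewrite /Uj /xj hadjM hadj_delta mulmxA.
    by rewrite /Uj /xj hadjM hadj_delta mulmxA.
  have [_ c3] := crit Uj hUj.
  rewrite E4 E5 in c3.
  have CS : forall k, frob (As k) (xj *m adj v + v *m adj xj) ^+ 2
        <= 4 * cv k * frob (As k) (xj *m adj xj).
    move=> k; exact: psd_CS (hA k) hv hxj.
  exact: (comb_j c3 CS).
have hc : (2 * \sum_k e k * cv k) *+ p <= \sum_k 4 * cv k * z k.
  have S : \sum_(j < p) (2 * \sum_k e k * cv k) <= \sum_(j < p) \sum_k 4 * cv k *
      frob (As k) ((X *m delta_mx j (0 : 'I_1)) *m adj (X *m delta_mx j (0 : 'I_1))).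
    by apply: ler_sum => j _; exact: Hj.
  rewrite sumr_const card_ord exchange_big /= in S.
  apply: (le_trans S); rewrite le_eqVlt; apply/orP; left; apply/eqP; apply: eq_bigr => k _.
  by rewrite -mulr_sumr E6.
pose E := \sum_k e k ^+ 2.
have he : 0 <= L * (nu * fro2 v) - n%:R^-1 * \sum_k cv k * y k.
  have := psd_ge0 hM hv.
  rewrite frobBl !frobZl frob_tr_vv /meas_adj frob_suml.
  have -> : \sum_i frob ((y i)%:C *: As i) (v *m adj v) = \sum_k cv k * y k.
    by apply: eq_bigr => k _; rewrite frobZl mulrC.
  by rewrite mulrA.
set Q := alpha * fro2 (X *m adj X - xs *m adj xs) + beta * (fro2 X - nu) ^+ 2.
have hR : Q <= n%:R^-1 * E.
  have := hRIP X hX; rewrite -/nu -/Q.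
  have -> : nrm2 (meas As (X *m adj X - xs *m adj xs)) = E.
    rewrite /nrm2 /E; apply: eq_bigr => k _; rewrite /meas frobBr /e /z.
    change (frob (As k) (xs *m adj xs)) with (y k).
    move: (y k) (frob (As k) (X *m adj X)) => a b; ring.
  by [].
have LB := @lower_bound _ _ _ X xs alpha beta nu w v alp be0 p1 erefl erefl erefl.
rewrite -/Q in LB.
have hcond' : 2 * L < (p%:R + 2) * (alpha + alpha * beta / (p%:R * beta + alpha)).
  have eqc : (p%:R + 2) * (1 + beta / (p%:R * beta + alpha)) * alpha
     = (p%:R + 2) * (alpha + alpha * beta / (p%:R * beta + alpha)) by ring.
  by rewrite -eqc.
have Q0 := @final_scalar R n p%:R E (\sum_k cv k * y k) (nu * fro2 v) Q
  (alpha + alpha * beta / (p%:R * beta + alpha)) L.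
have E0 : 0 <= E by apply: sumr_ge0 => k _; exact: sqr_ge0.
have V0 : 0 <= nu * fro2 v by apply: mulr_ge0; exact: fro2_ge0.
have c00 : 0 <= alpha + alpha * beta / (p%:R * beta + alpha).
  apply: addr_ge0; first exact: ltW.
  apply: divr_ge0; first exact: mulr_ge0.
  by apply: addr_ge0 => //; apply: mulr_ge0.
have hn : n = 0%N -> E = 0.
  move=> n0; rewrite /E; apply: big1 => k _; exfalso.
  by have := ltn_ord k; rewrite {2}n0.
have h1 : 2 * p%:R * E <= 4 * \sum_k cv k * y k - 4 * E.
  exact: (comb_final hc (fun k => erefl) ha hb).
have P1 : 1 <= (p%:R : R) by rewrite ler1n.
have hQ := Q0 P1 E0 V0 c00 L0 hn h1 he hR LB hcond'.
have hS : fro2 (X *m adj X - xs *m adj xs) = 0.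
  apply/eqP; rewrite eq_le fro2_ge0 andbT.
  have B0 : 0 <= beta * (fro2 X - nu) ^+ 2 by apply: mulr_ge0 => //; exact: sqr_ge0.
  exact: lemH3 alp B0 hQ.
by apply/eqP; rewrite -subr_eq0; apply/eqP; exact: fro2_eq0.
Qed.
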